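(* Let $\mathcal{V}$ be an equational class and $\mathbf{A}\in\mathsf{FP}(\mathcal{V})$. (a) For any onto homomorphism $u\colon\mathbf{A}\to\mathbf{B}$: $u\in\mathsf{C}_{\mathcal{V}}(\mathbf{A})$ iff $\ker(u)\in\mathrm{Con}_e(\mathbf{A})$. (b) For all $u,v\in\mathsf{C}_{\mathcal{V}}(\mathbf{A})$: $u\le v$ iff $\ker(v)\subseteq\ker(u)$. Hence $\ker\colon\mathsf{C}_{\mathcal{V}}(\mathbf{A})\to\mathrm{Con}_e(\mathbf{A})$ determines an equivalence between the preordered sets $(\mathsf{C}_{\mathcal{V}}(\mathbf{A}),\le)$ and $(\mathrm{Con}_e(\mathbf{A}),\supseteq)$ (that is, every $\theta\in\mathrm{Con}_e(\mathbf{A})$ is equivalent in the preorder to $\ker(u)$ for some $u\in\mathsf{C}_{\mathcal{V}}(\mathbf{A})$, and $u\le v$ iff $\ker(u)\supseteq\ker(v)$), and $\mathrm{type}(\mathsf{C}_{\mathcal{V}}(\mathbf{A}))=\mathrm{type}(\mathrm{Con}_e(\mathbf{A}))$.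
   Context: $\mathsf{FP}(\mathcal{V})$ is the class of finitely presented algebras of $\mathcal{V}$ (quotients of a finitely generated free algebra $\mathbf{F}_{\mathcal{V}}(X)$ by a congruence generated by finitely many pairs). $\mathbf{F}_{\mathcal{V}}(\omega)$ is the free algebra of $\mathcal{V}$ on countably infinitely many generators. An algebra is exact in $\mathcal{V}$ if it is isomorphic to a finitely generated subalgebra of $\mathbf{F}_{\mathcal{V}}(\omega)$. A coexact unifier of $\mathbf{A}\in\mathsf{FP}(\mathcal{V})$ is an onto homomorphism $u\colon\mathbf{A}\to\mathbf{E}$ with $\mathbf{E}$ exact in $\mathcal{V}$; for coexact unifiers $u\colon\mathbf{A}\to\mathbf{E}_u$, $v\colon\mathbf{A}\to\mathbf{E}_v$, $u\le v$ iff there is a homomorphism $f\colon\mathbf{E}_v\to\mathbf{E}_u$ with $f\circ v=u$; $\mathsf{C}_{\mathcal{V}}(\mathbf{A})$ is the set of coexact unifiers preordered by $\le$. $\mathrm{Con}_e(\mathbf{A})$ is the set of congruences $\theta$ of $\mathbf{A}$ such that $\mathbf{A}/\theta$ is isomorphic to a subalgebra of $\mathbf{F}_{\mathcal{V}}(\omega)$. Types of a nonempty preordered set: via $\mu$-sets (complete sets — every element lies below a member — of pairwise incomparable elements): $0$ if none exists, $\infty$ if infinite, $\omega$ if finite of size $>1$, $1$ if of size $1$. *)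

(* Defs.v *)
From mathcomp Require Import ssreflect ssrfun ssrbool eqtype ssrnat seq fintype.
From Stdlib Require Import ClassicalEpsilon.
From Stdlib Require List.

Set Implicit Arguments.
Unset Strict Implicit.
Unset Printing Implicit Defensive.

Record signature := Signature { op : Type; arity : op -> nat }.

Section UA.
Variable S : signature.

Record algebra := Algebra {
  carrier :> Type;
  interp : forall o : op S, ('I_(arity o) -> carrier) -> carrier }.

Inductive term (X : Type) : Type :=
  | Var : X -> term X
  | App : forall o : op S, ('I_(arity o) -> term X) -> term X.

Fixpoint eval (A : algebra) (X : Type) (g : X -> A) (t : term X) {struct t} : A :=
  match t with
  | Var x => g x
  | App o args => @interp A o (fun i => eval g (args i))
  end.

Definition term_alg (X : Type) : algebra := @Algebra (term X) (@App X).

Definition hom (A B : algebra) (f : A -> B) : Prop :=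
  forall o (args : 'I_(arity o) -> A), f (@interp A o args) = @interp B o (fun i => f (args i)).

Definition surjective (A B : Type) (f : A -> B) : Prop := forall b, exists a, f a = b.

Definition congruence (A : algebra) (th : A -> A -> Prop) : Prop :=
  [/\ (forall a, th a a), (forall a b, th a b -> th b a),
      (forall a b c, th a b -> th b c -> th a c) &
      (forall o (a b : 'I_(arity o) -> A), (forall i, th (a i) (b i)) ->
          th (@interp A o a) (@interp A o b))].

Definition ker (A B : Type) (f : A -> B) : A -> A -> Prop := fun a b => f a = f b.

Definition qcar (A : Type) (th : A -> A -> Prop) : Type :=
  {P : A -> Prop | exists a, P = th a}.
Definition qcls (A : Type) (th : A -> A -> Prop) (a : A) : qcar th :=
  exist _ (th a) (ex_intro _ a erefl).
Definition qrep (A : Type) (th : A -> A -> Prop) (x : qcar th) : A :=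
  proj1_sig (constructive_indefinite_description _ (proj2_sig x)).
Definition quot_alg (A : algebra) (th : A -> A -> Prop) : algebra :=
  @Algebra (qcar th) (fun o args => qcls th (@interp A o (fun i => qrep (args i)))).

Definition fingen (A : algebra) : Prop :=
  exists (n : nat) (gens : 'I_n -> A), forall a : A, exists t : term 'I_n, eval gens t = a.

(* The equational class V = Mod(Sigma) axiomatized by a set Sigma of identities. *)
Definition identities := term nat -> term nat -> Prop.

Definition model (Sigma : identities) (A : algebra) : Prop :=
  forall s t, Sigma s t -> forall g : nat -> A, eval g s = eval g t.

Definition eqV (Sigma : identities) (X : Type) (s t : term X) : Prop :=
  forall B : algebra, model Sigma B -> forall g : X -> B, eval g s = eval g t.

Definition free_alg (Sigma : identities) (X : Type) : algebra :=
  @quot_alg (term_alg X) (@eqV Sigma X).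

Definition Fomega (Sigma : identities) : algebra := free_alg Sigma nat.

(* Congruence of F_V('I_n) generated by the finitely many pairs R,
   pulled back to terms: the least congruence of T('I_n) containing the
   V-identities and R. *)
Definition CgV (Sigma : identities) (n : nat) (R : seq (term 'I_n * term 'I_n))
  (s t : term 'I_n) : Prop :=
  forall th : term 'I_n -> term 'I_n -> Prop,
    congruence (A := term_alg 'I_n) th ->
    (forall s' t', eqV Sigma s' t' -> th s' t') ->
    (forall p, List.In p R -> th p.1 p.2) ->
    th s t.

Definition isomorphic (A B : algebra) : Prop :=
  exists f : A -> B, hom f /\ bijective f.

Definition FP (Sigma : identities) (A : algebra) : Prop :=
  exists (n : nat) (R : seq (term 'I_n * term 'I_n)),
    isomorphic A (@quot_alg (term_alg 'I_n) (CgV Sigma R)).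

Definition embeds_Fomega (Sigma : identities) (B : algebra) : Prop :=
  exists f : B -> Fomega Sigma, hom f /\ injective f.

Definition exact (Sigma : identities) (E : algebra) : Prop :=
  fingen E /\ embeds_Fomega Sigma E.

Definition Con_e (Sigma : identities) (A : algebra) (th : A -> A -> Prop) : Prop :=
  congruence th /\ embeds_Fomega Sigma (@quot_alg A th).

Record coexact_unifier (Sigma : identities) (A : algebra) := CoexactUnifier {
  u_target : algebra;
  u_map : A -> u_target;
  u_hom : hom u_map;
  u_onto : surjective u_map;
  u_exact : exact Sigma u_target }.

Definition unif_le (Sigma : identities) (A : algebra) (u v : coexact_unifier Sigma A) : Prop :=
  exists f : u_target v -> u_target u, hom f /\ forall a, f (u_map v a) = u_map u a.

Definition Con_e_type (Sigma : identities) (A : algebra) : Type :=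
  {th : A -> A -> Prop | Con_e Sigma th}.

Definition supseteq_le (Sigma : identities) (A : algebra) (t1 t2 : Con_e_type Sigma A) : Prop :=
  forall a b, proj1_sig t2 a b -> proj1_sig t1 a b.

End UA.

Section Types.
Variables (T : Type) (le : T -> T -> Prop).

Definition complete_set (M : T -> Prop) : Prop := forall x, exists2 m, M m & le x m.

Definition mu_set (M : T -> Prop) : Prop :=
  complete_set M /\ (forall x y, M x -> M y -> x <> y -> ~ le x y).

Definition finite_set (M : T -> Prop) : Prop :=
  exists s : list T, forall x, M x <-> List.In x s.

Inductive unif_type := type0 | type1 | type_omega | type_infty.

Definition has_type (ty : unif_type) : Prop :=
  match ty with
  | type0 => ~ exists M, mu_set M
  | type1 => exists M, mu_set M /\ exists x, forall y, M y <-> y = x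
  | type_omega => exists M, mu_set M /\ finite_set M /\
                    exists x y, [/\ M x, M y & x <> y]
  | type_infty => exists M, mu_set M /\ ~ finite_set M
  end.
End Types.

(* Main.v *)
Require Import Defs.
From mathcomp Require Import ssreflect ssrfun ssrbool eqtype ssrnat seq fintype.
From Stdlib Require Import ClassicalEpsilon FunctionalExtensionality PropExtensionality ProofIrrelevance Classical.
From Stdlib Require List.
Set Implicit Arguments.
Unset Strict Implicit.

Lemma qcls_eq (T : Type) (th : T -> T -> Prop)
  (hs : forall a b, th a b -> th b a) (ht : forall a b c, th a b -> th b c -> th a c)
  a b : th a b -> qcls th a = qcls th b.
Proof.
move=> hab.
have E : th a = th b.
  apply: functional_extensionality => x; apply: propositional_extensionality.
  split=> h; [exact: ht (hs _ _ hab) h | exact: ht hab h].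
rewrite /qcls; move: (ex_intro _ a _) (ex_intro _ b _).
rewrite E => p q; by rewrite (proof_irrelevance _ p q).
Qed.

Lemma qcls_inj (T : Type) (th : T -> T -> Prop) (hr : forall a, th a a) a b :
  qcls th a = qcls th b -> th a b.
Proof. move=> /(congr1 (@proj1_sig _ _)) /= ->; exact: hr. Qed.

Lemma qclsK (T : Type) (th : T -> T -> Prop) (x : qcar th) : qcls th (qrep x) = x.
Proof.
case: x => P HP; rewrite /qrep /qcls /=.
case: (constructive_indefinite_description _ HP) => a0 e /=.
subst P; f_equal; apply: proof_irrelevance.
Qed.

Lemma th_qrep (T : Type) (th : T -> T -> Prop) (hr : forall a, th a a)
  (hs : forall a b, th a b -> th b a) a : th a (qrep (qcls th a)).
Proof. apply: hs; apply: qcls_inj => //; exact: qclsK. Qed.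

Lemma qcls_hom (S : signature) (A : algebra S) (th : A -> A -> Prop) :
  congruence th -> hom (A:=A) (B:=quot_alg th) (qcls th).
Proof.
case=> hr hs ht hc o args /=.
apply: qcls_eq => //; apply: hc => i; exact: th_qrep.
Qed.

Lemma eval_hom (S : signature) (A B : algebra S) (h : A -> B) (X : Type) (g0 : X -> A) :
  hom h -> forall t, eval (fun x => h (g0 x)) t = h (eval g0 t).
Proof.
move=> hh; elim=> [x|o args IH] //=.
rewrite hh; f_equal; apply: functional_extensionality => i; exact: IH.
Qed.

Lemma eval_Var (S : signature) (X : Type) (t : term S X) : eval (A:=term_alg S X) (@Var S X) t = t.
Proof.
elim: t => [x|o args IH] //=; f_equal; apply: functional_extensionality => i; exact: IH.
Qed.

Lemma CgV_cong (S : signature) (Sigma : identities S) n (R : seq (term S 'I_n * term S 'I_n)) :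
  congruence (A:=term_alg S 'I_n) (CgV Sigma R).
Proof.
split.
- move=> a th [hr _ _ _] _ _; exact: hr.
- move=> a b h th Hc h1 h2; case: (Hc) => _ hs _ _; apply: hs; exact: h.
- move=> a b c h h' th Hc h1 h2; case: (Hc) => _ _ ht _; apply: ht (h _ _ _ _) (h' _ _ _ _) => //.
- move=> o a b h th Hc h1 h2; case: (Hc) => _ _ _ hc; apply: hc => i; exact: h.
Qed.

Lemma fingen_FP (S : signature) (Sigma : identities S) (A : algebra S) :
  FP Sigma A -> fingen A.
Proof.
case=> n [R [f [hf [g fK gK]]]].
have C := CgV_cong Sigma R.
have hg : hom (A:=quot_alg (A:=term_alg S 'I_n) (CgV Sigma R)) (B:=A) g.
  move=> o args; apply: (can_inj fK); rewrite gK hf; f_equal.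
  by apply: functional_extensionality => i; rewrite gK.
exists n, (fun i => g (qcls (A:=term_alg S 'I_n) (CgV Sigma R) (Var S i))) => a.
exists (qrep (f a)).
rewrite (@eval_hom S (quot_alg (A:=term_alg S 'I_n) (CgV Sigma R)) A g _ (fun i => qcls (A:=term_alg S 'I_n) (CgV Sigma R) (Var S i))) //.
rewrite (@eval_hom S (term_alg S 'I_n) (quot_alg (A:=term_alg S 'I_n) (CgV Sigma R)) (qcls (A:=term_alg S 'I_n) (CgV Sigma R)) _ (@Var S 'I_n)); last exact: qcls_hom.
by rewrite eval_Var qclsK fK.
Qed.

Lemma fingen_img (S : signature) (A B : algebra S) (u : A -> B) :
  hom u -> surjective u -> fingen A -> fingen B.
Proof.
move=> hu su [n [gens H]]; exists n, (fun i => u (gens i)) => b.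
case: (su b) => a <-; case: (H a) => t <-; exists t; exact: eval_hom.
Qed.

Lemma ker_cong (S : signature) (A B : algebra S) (u : A -> B) : hom u -> congruence (ker u).
Proof.
move=> hu; split; rewrite /ker.
- by [].
- by move=> a b ->.
- by move=> a b c -> ->.
- move=> o a b h; rewrite !hu; f_equal; exact: functional_extensionality.
Qed.

Lemma part_a (S : signature) (Sigma : identities S) (A : algebra S) (hA : FP Sigma A)
  (B : algebra S) (u : A -> B) : hom u -> surjective u ->
     (exact Sigma B <-> Con_e Sigma (ker u)).
Proof.
move=> hu su; have C := ker_cong hu; case: (C) => hr hs ht hc.
split.
- case=> _ [e [he ie]]; split => //.
  exists (fun x => e (u (qrep x))); split.
  + move=> o args /=.
    have -> : u (qrep (qcls (ker u) (interp (fun i => qrep (args i)))))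
            = u (interp (fun i => qrep (args i))).
      symmetry; exact: (th_qrep hr hs).
    by rewrite hu he.
  + move=> x y /ie E; rewrite -(qclsK x) -(qclsK y); exact: qcls_eq.
- case=> _ [g [hg ig]]; split; first exact: fingen_img hu su (fingen_FP hA).
  pose pre b := proj1_sig (constructive_indefinite_description _ (su b)).
  have preK b : u (pre b) = b by rewrite /pre; case: constructive_indefinite_description.
  exists (fun b => g (qcls (ker u) (pre b))); split.
  + move=> o args; rewrite -hg -(qcls_hom C); congr g; apply: qcls_eq => //.
    rewrite /ker preK hu; f_equal; apply: functional_extensionality => i; by rewrite preK.
  + move=> b b' /ig /(qcls_inj hr); by rewrite /ker !preK.
Qed.

Lemma part_b (S : signature) (Sigma : identities S) (A : algebra S)
  (u v : coexact_unifier Sigma A) :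
  unif_le u v <-> (forall a b, ker (u_map v) a b -> ker (u_map u) a b).
Proof.
split.
- case=> f [_ hf] a b; rewrite /ker -!hf => ->; done.
- move=> H.
  pose pre b := proj1_sig (constructive_indefinite_description _ (@u_onto _ _ _ v b)).
  have preK b : u_map v (pre b) = b by rewrite /pre; case: constructive_indefinite_description.
  exists (fun b => u_map u (pre b)); split.
  + move=> o args; rewrite -(u_hom u); apply: H; rewrite /ker preK (u_hom v).
    f_equal; apply: functional_extensionality => i; by rewrite preK.
  + move=> a; apply: H; by rewrite /ker preK.
Qed.

Lemma unif_le_refl (S : signature) (Sigma : identities S) (A : algebra S)
  (u : coexact_unifier Sigma A) : unif_le u u.
Proof. by apply/part_b. Qed.

Lemma unif_le_trans (S : signature) (Sigma : identities S) (A : algebra S)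
  (u v w : coexact_unifier Sigma A) : unif_le u v -> unif_le v w -> unif_le u w.
Proof. move=> /part_b h1 /part_b h2; apply/part_b => a b /h2 /h1; done. Qed.

Lemma ker_qcls (S : signature) (A : algebra S) (th : A -> A -> Prop) :
  congruence th -> ker (qcls th) = th.
Proof.
case=> hr hs ht _; apply: functional_extensionality => a;
apply: functional_extensionality => b; apply: propositional_extensionality.
split; [exact: qcls_inj | exact: qcls_eq].
Qed.

Definition mkU (S : signature) (Sigma : identities S) (A : algebra S) (hA : FP Sigma A)
  (th : A -> A -> Prop) (H : Con_e Sigma th) : coexact_unifier Sigma A.
Proof.
refine (@CoexactUnifier S Sigma A (quot_alg th) (qcls th) (qcls_hom (proj1 H)) _ _).
- move=> x; exists (qrep x); exact: qclsK.
- apply/(part_a hA (qcls_hom (proj1 H))); first by move=> x; exists (qrep x); exact: qclsK.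
  by rewrite ker_qcls //; exact: proj1 H.
Defined.

Lemma mkU_ker (S : signature) (Sigma : identities S) (A : algebra S) (hA : FP Sigma A)
  (th : A -> A -> Prop) (H : Con_e Sigma th) : ker (u_map (mkU hA H)) = th.
Proof. exact: ker_qcls (proj1 H). Qed.

Definition img (T1 T2 : Type) (phi : T1 -> T2) (M : T1 -> Prop) : T2 -> Prop :=
  fun y => exists x, M x /\ phi x = y.

Lemma mu_inj (T1 T2 : Type) (le1 : T1 -> T1 -> Prop) (le2 : T2 -> T2 -> Prop) (phi : T1 -> T2)
  (Hphi : forall x y, le1 x y <-> le2 (phi x) (phi y)) (refl2 : forall y, le2 y y)
  M : mu_set le1 M -> forall x y, M x -> M y -> phi x = phi y -> x = y.
Proof.
move=> [_ HM] x y Mx My E; apply: NNPP => nxy; apply: (HM x y Mx My nxy).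
by apply/Hphi; rewrite E.
Qed.

Lemma mu_img (T1 T2 : Type) (le1 : T1 -> T1 -> Prop) (le2 : T2 -> T2 -> Prop) (phi : T1 -> T2)
  (Hphi : forall x y, le1 x y <-> le2 (phi x) (phi y))
  (Hcof : forall y, exists x, le2 y (phi x))
  (trans2 : forall a b c, le2 a b -> le2 b c -> le2 a c)
  M : mu_set le1 M -> mu_set le2 (img phi M).
Proof.
move=> [HC HM]; split.
- move=> y; case: (Hcof y) => x hx; case: (HC x) => m Mm hm.
  exists (phi m); first by exists m.
  exact: trans2 hx (proj1 (Hphi _ _) hm).
- move=> _ _ [x [Mx <-]] [y [My <-]] nxy /Hphi; apply: HM => // E; apply: nxy; by rewrite E.
Qed.

Lemma lift_list (T1 T2 : Type) (phi : T1 -> T2) (M : T1 -> Prop) (s : list T2) :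
  (forall y, List.In y s -> img phi M y) ->
  exists l, (forall x, List.In x l -> M x) /\
            (forall y, List.In y s -> exists x, List.In x l /\ phi x = y).
Proof.
elim: s => [|y s IH] H.
- by exists nil; split.
- case: (H y (or_introl erefl)) => x [Mx ex].
  case: IH => [z hz|l [h1 h2]]; first by apply: H; right.
  exists (x :: l); split.
  + by move=> z [<-|hz]; [|apply: h1].
  + move=> z [<-|hz]; first by exists x; split; [left|].
    case: (h2 z hz) => w [hw ew]; exists w; split => //; by right.
Qed.

Lemma transfer (T1 T2 : Type) (le1 : T1 -> T1 -> Prop) (le2 : T2 -> T2 -> Prop) (phi : T1 -> T2)
  (Hphi : forall x y, le1 x y <-> le2 (phi x) (phi y))
  (Hcof : forall y, exists x, le2 y (phi x))
  (refl2 : forall y, le2 y y)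
  (trans2 : forall a b c, le2 a b -> le2 b c -> le2 a c)
  (ty : unif_type) : ty <> type0 -> has_type le1 ty -> has_type le2 ty.
Proof.
have inj := mu_inj Hphi refl2; have mi := mu_img Hphi Hcof trans2.
case: ty => // _ /=.
- case=> M [muM [x Hx]]; exists (img phi M); split; first exact: mi.
  exists (phi x) => y; split.
  + by case=> z [/Hx -> <-].
  + move=> ->; exists x; split => //; exact/Hx.
- case=> M [muM [[s Hs] [x [y [Mx My nxy]]]]]; exists (img phi M); split; first exact: mi.
  split.
  + exists (List.map phi s) => z; rewrite /img; split.
    * case=> w [Mw <-]; apply: List.in_map; exact/Hs.
    * case/List.in_map_iff => w [<- /Hs hw]; by exists w.
  + exists (phi x), (phi y); split; [by exists x|by exists y|].
    move=> E; apply: nxy; exact: inj muM _ _ Mx My E.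
- case=> M [muM nf]; exists (img phi M); split; first exact: mi.
  case=> s Hs; apply: nf.
  case: (@lift_list _ _ phi M s) => [y /Hs //|l [h1 h2]].
  exists l => x; split; last exact: h1.
  move=> Mx; case: (h2 (phi x)) => [|w [hw ew]]; first by apply/Hs; exists x.
  by rewrite -(inj M muM w x (h1 _ hw) Mx ew).
Qed.

Lemma transfer0 (T1 T2 : Type) (le1 : T1 -> T1 -> Prop) (le2 : T2 -> T2 -> Prop) (phi : T1 -> T2)
  (Hphi : forall x y, le1 x y <-> le2 (phi x) (phi y))
  (Hcof : forall y, exists x, le2 y (phi x))
  (trans2 : forall a b c, le2 a b -> le2 b c -> le2 a c) :
  (exists M, mu_set le1 M) -> exists M, mu_set le2 M.
Proof. case=> M muM; exists (img phi M); exact: mu_img muM. Qed.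

Lemma eq_exist' (T : Type) (P : T -> Prop) x y (p : P x) (q : P y) :
  x = y -> exist P x p = exist P y q.
Proof. move=> E; subst y; f_equal; exact: proof_irrelevance. Qed.

Theorem theorem3p7 (S : signature) (Sigma : identities S) (A : algebra S)
  (hA : FP Sigma A) :
  (* (a) *)
  (forall (B : algebra S) (u : A -> B), hom u -> surjective u ->
     (exact Sigma B <-> Con_e Sigma (ker u))) /\
  (* (b) *)
  (forall u v : coexact_unifier Sigma A,
     unif_le u v <-> (forall a b, ker (u_map v) a b -> ker (u_map u) a b)) /\
  (* every theta in Con_e(A) is (equivalent to) ker(u) for some u in C_V(A) *)
  (forall th : A -> A -> Prop, Con_e Sigma th ->
     exists u : coexact_unifier Sigma A, forall a b, th a b <-> ker (u_map u) a b) /\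
  (* type(C_V(A)) = type(Con_e(A), superseteq) *)
  (forall ty : unif_type,
     has_type (@unif_le S Sigma A) ty <-> has_type (@supseteq_le S Sigma A) ty).
Proof.
split; first exact: part_a hA.
split; first exact: part_b.
split.
  move=> th H; exists (mkU hA H) => a b; by rewrite mkU_ker.
pose phi (u : coexact_unifier Sigma A) : Con_e_type Sigma A :=
  exist _ (ker (u_map u)) (proj1 (part_a hA (u_hom u) (@u_onto _ _ _ u)) (u_exact u)).
pose psi (k : Con_e_type Sigma A) := mkU hA (proj2_sig k).
have phipsi k : phi (psi k) = k.
  case: k => th H; rewrite /phi /psi /=.
  apply: eq_exist'; exact: ker_qcls (proj1 H).
have Hphi : forall x y, unif_le x y <-> supseteq_le (phi x) (phi y) by move=> x y; rewrite /supseteq_le /=; exact: part_b.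
have Hcof : forall k, exists u, supseteq_le k (phi u) by move=> k; exists (psi k); rewrite phipsi.
have Hpsi : forall a b, supseteq_le a b <-> unif_le (psi a) (psi b).
  by move=> a b; rewrite Hphi !phipsi.
have Hcof2 : forall c, exists k, unif_le c (psi k).
  move=> c; exists (phi c); by apply/Hphi; rewrite phipsi.
have r2 : forall k : Con_e_type Sigma A, supseteq_le k k by move=> k a b.
have t2 : forall a b c : Con_e_type Sigma A, supseteq_le a b -> supseteq_le b c -> supseteq_le a c.
  by move=> a b c h1 h2 x y /h2 /h1.
have r1 := @unif_le_refl S Sigma A.
have t1 := @unif_le_trans S Sigma A.
have tr : forall ty, ty <> type0 ->
   (has_type (@unif_le S Sigma A) ty <-> has_type (@supseteq_le S Sigma A) ty).
  move=> ty n; split; [exact: (transfer Hphi Hcof r2 t2 n) | exact: (transfer Hpsi Hcof2 r1 t1 n)].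
case=> [|||]; last 3 first.
- exact: tr.
- exact: tr.
- exact: tr.
rewrite /=; split => H1 H2; apply: H1.
- exact: transfer0 Hpsi Hcof2 t1 H2.
- exact: transfer0 Hphi Hcof t2 H2.
Qed.
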